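(* Let $I$ be a finite set of positive integers and $m=\max(I\cup\{0\})$. Then for every integer $n\ge m+2$, $$d(I;n)\ge |d(I;-1)|.$$
   Context: For $n>m$, $d(I;n)$ is the number of permutations $\pi\in\mathfrak S_n$ with $\{i\mid\pi_i>\pi_{i+1}\}=I$; it is a polynomial in $n$, and $d(I;-1)$ is the value of this polynomial at $-1$. *)

(* Defs.v *)
From HB Require Import structures.
From mathcomp Require Import all_boot all_order all_algebra all_fingroup.
Set Implicit Arguments. Unset Strict Implicit. Unset Printing Implicit Defensive.
Import Order.TTheory GRing.Theory Num.Theory.

(* Positions are 1-indexed as in the paper: pi = pi_1 ... pi_n, where
   pi_(k+1) is represented by s (k : 'I_n) (0-indexed ordinal).
   i (>= 1) is a descent of s iff pi_i > pi_(i+1), i.e. s (i-1) > s i. *)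
Definition is_descent (n : nat) (s : 'S_n) (i : nat) : bool :=
  [exists j : 'I_n, exists k : 'I_n,
     [&& 0 < i, val j == i.-1, val k == i & s k < s j]].

Definition has_descent_set (I : seq nat) (n : nat) (s : 'S_n) : bool :=
  all (is_descent s) I && [forall j : 'I_n, is_descent s j ==> (val j \in I)].

Definition dcount (I : seq nat) (n : nat) : nat :=
  #|[set s : 'S_n | has_descent_set I s]|.

(* Main.v *)
Require Import Defs.
From HB Require Import structures.
From mathcomp Require Import all_boot all_order all_algebra all_fingroup.
Import Order.TTheory GRing.Theory Num.Theory.
Local Open Scope ring_scope.
From mathcomp Require Import zify ring.
Set Implicit Arguments. Unset Strict Implicit. Unset Printing Implicit Defensive.
Local Open Scope nat_scope.

Definition wd (s : seq nat) : bitseq :=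
  mkseq (fun i => nth 0 s i.+1 < nth 0 s i) (size s).-1.
Definition ins (s : seq nat) (q : nat) : seq nat :=
  take q (map succn s) ++ 0 :: drop q (map succn s).
Definition insw (b : bitseq) (n q : nat) : bitseq :=
  mkseq (fun i => if i.+1 < q then nth false b i else if i.+1 == q then true
                  else if i == q then false else nth false b i.-1) n.
Definition perms n := permutations (iota 0 n).

Lemma size_ins s q : size (ins s q) = (size s).+1.
Proof. by rewrite /ins size_cat /= addnS -size_cat cat_take_drop size_map. Qed.

Lemma nth_ins s q j : q <= size s -> j <= size s ->
  nth 0 (ins s q) j = if j < q then (nth 0 s j).+1 else if j == q then 0
                      else (nth 0 s j.-1).+1.
Proof.
move=> qs js; rewrite /ins nth_cat size_take size_map.
have -> : (if q < size s then q else size s) = q by case: ltnP => //; lia.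
case: ltnP => jq.
  by rewrite nth_take // (nth_map 0) //; lia.
case: eqP => [->|jq']; first by rewrite subnn.
have -> : j - q = (j - q).-1.+1 by lia.
rewrite /= nth_drop (nth_map 0); last by lia.
by congr (nth _ _ _).+1; lia.
Qed.

Lemma wd_ins s q : q <= size s -> wd (ins s q) = insw (wd s) (size s) q.
Proof.
move=> qs; rewrite /wd /insw size_ins /=.
apply: (@eq_from_nth _ false) => [|i]; rewrite !size_mkseq // => ilt.
rewrite [LHS]nth_mkseq // [RHS]nth_mkseq // !nth_ins //; try lia.
have [h1|h1] := ltnP i.+1 q.
  rewrite (_ : i < q) ?ltnS ?nth_mkseq //; lia.
have [h2|h2] := eqVneq i.+1 q.
  by rewrite -h2 ltnSn.
rewrite (_ : i < q = false); last by lia.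
have [h3|h3] := eqVneq i q.
  by [].
rewrite nth_mkseq; last by lia.
by rewrite ltnS; have -> : i.+1.-1 = i.-1.+1 by lia.
Qed.

Lemma index_ins s q : q <= size s -> index 0 (ins s q) = q.
Proof.
move=> qs; rewrite /ins index_cat.
have -> : (0 \in take q (map succn s)) = false.
  by apply/negbTE/negP => /mem_take/mapP [x _].
rewrite /= size_take size_map; case: ltnP => h; lia.
Qed.

Lemma ins_inj s1 s2 q1 q2 : size s1 = size s2 -> q1 <= size s1 -> q2 <= size s2 ->
  ins s1 q1 = ins s2 q2 -> s1 = s2 /\ q1 = q2.
Proof.
move=> ss q1s q2s e.
have eq : q1 = q2 by rewrite -(index_ins q1s) -(index_ins q2s) e.
subst q2; split => //.
move: e; rewrite /ins => /eqP; rewrite eqseq_cat; last first.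
  by rewrite !size_take !size_map ss.
case/andP => /eqP e1; rewrite eqseq_cons => /andP [_ /eqP e2].
have : map succn s1 = map succn s2.
  by rewrite -(cat_take_drop q1 (map succn s1)) e1 e2 cat_take_drop.
by move/(inj_map succn_inj).
Qed.

Lemma perm_ins s q n : perm_eq s (iota 0 n) -> perm_eq (ins s q) (iota 0 n.+1).
Proof.
move=> ps; rewrite /ins -cat1s perm_catCA /= cat_take_drop perm_cons.
have -> : iota 1 n = map succn (iota 0 n).
  by rewrite (iotaDl 1 0 n); apply: eq_map => x; rewrite add1n.
exact: perm_map.
Qed.

Lemma perms_dec n :
  perm_eq (perms n.+1) [seq ins s q | s <- perms n, q <- iota 0 n.+1].
Proof.
have U : uniq [seq ins s q | s <- perms n, q <- iota 0 n.+1].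
  apply: allpairs_uniq; [exact: permutations_uniq | exact: iota_uniq |].
  move=> [s1 q1] [s2 q2] /allpairsP [[a b] [ha hb [-> ->]]].
  move=> /allpairsP [[c d] [hc hd [-> ->]]] /= e.
  move: ha hc hb hd; rewrite !mem_permutations !mem_iota /= => /perm_size ha /perm_size hc hb hd.
  rewrite size_iota in ha hc.
  move: hb hd; rewrite !add0n !ltnS => hb hd.
  have [] := ins_inj (etrans ha (esym hc)) _ _ e; [by rewrite ha|by rewrite hc|by move=> -> ->].
have S1 : {subset [seq ins s q | s <- perms n, q <- iota 0 n.+1] <= perms n.+1}.
  move=> x /allpairsP [[a b] [/= ha hb ->]].
  by rewrite mem_permutations; apply: perm_ins; rewrite -mem_permutations.
have S2 : size (perms n.+1) <= size [seq ins s q | s <- perms n, q <- iota 0 n.+1].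
  by rewrite size_allpairs !size_permutations ?iota_uniq // !size_iota factS mulnC.
have [_ E] := uniq_min_size U S1 S2.
rewrite perm_sym; apply: uniq_perm => //; exact: permutations_uniq.
Qed.

Lemma count_sumb (T : eqType) (P : pred T) (r : seq T) :
  count P r = \sum_(x <- r) (P x : nat).
Proof. by elim: r => [|x r IH]; rewrite ?big_nil ?big_cons //= IH. Qed.

Lemma size_perms s n : s \in perms n -> size s = n.
Proof. by rewrite mem_permutations => /perm_size; rewrite size_iota. Qed.

Lemma count_dec (F : bitseq -> bool) n :
  count (fun s => F (wd s)) (perms n.+1) =
  \sum_(s <- perms n) \sum_(q < n.+1) (F (insw (wd s) n q) : nat).
Proof.
rewrite (seq.permP (perms_dec n)) count_sumb big_allpairs_dep.
apply: eq_big_seq => s /size_perms sn.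
rewrite -(big_mkord xpredT (fun q => (F (insw (wd s) n q) : nat))) /index_iota subn0.
by apply: eq_big_seq => q; rewrite mem_iota => /andP [_ hq]; rewrite wd_ins sn //; lia.
Qed.

Definition tailfalse (r : nat) (w : bitseq) :=
  all (fun i => (i < r) || ~~ nth false w i) (iota 0 (size w)).

Lemma tailfalseP r w :
  reflect (forall i, r <= i < size w -> nth false w i = false) (tailfalse r w).
Proof.
apply: (iffP allP) => [H i /andP [ri iw]|H i].
  have := H i; rewrite mem_iota iw /= => /(_ isT).
  by rewrite ltnNge ri /= => /negbTE.
rewrite mem_iota /= => iw; case: (ltnP i r) => //= ri.
by rewrite H // ri.
Qed.

Lemma take_mkseq (T : Type) (f : nat -> T) k n :
  take k (mkseq f n) = mkseq f (minn k n).
Proof. by rewrite /mkseq -map_take take_iota. Qed.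

Lemma size_insw b n q : size (insw b n q) = n.
Proof. exact: size_mkseq. Qed.

Lemma nth_insw b n q i : i < n -> nth false (insw b n q) i =
  if i.+1 < q then nth false b i else if i.+1 == q then true
  else if i == q then false else nth false b i.-1.
Proof. by move=> h; rewrite nth_mkseq. Qed.

Lemma take_insw_eq b n r : r <= n -> size b = n.-1 ->
  take r.-1 (insw b n r) = take r.-1 b.
Proof.
move=> rn sb; rewrite take_mkseq.
apply: (@eq_from_nth _ false) => [|i]; rewrite size_mkseq.
  by rewrite size_take sb; case: ltnP => h; lia.
move=> hi; rewrite nth_mkseq // nth_take; last by lia.
by rewrite ifT //; lia.
Qed.

Lemma tail_insw_eq b n r : r <= n -> size b = n.-1 ->
  tailfalse r (insw b n r) = tailfalse r b.
Proof.
move=> rn sb; apply/tailfalseP/tailfalseP; rewrite size_insw sb => H i /andP [ri iw].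
  have := H i.+1; rewrite nth_insw; last by lia.
  rewrite ifF; last by lia. rewrite ifF; last by lia. rewrite ifF; last by lia.
  by apply; lia.
rewrite nth_insw //; rewrite ifF; last by lia. rewrite ifF; last by lia.
case: eqP => // /eqP ne; apply: H; lia.
Qed.

Lemma tail_insw_gt b n r q : r < q -> q <= n ->
  tailfalse r (insw b n q) = false.
Proof.
move=> rq qn; apply/negbTE/negP => /tailfalseP /(_ q.-1).
rewrite size_insw nth_insw; last by lia.
rewrite ifF; last by lia. rewrite ifT; last by apply/eqP; lia.
by move=> H; have := H ltac:(lia).
Qed.

Definition Qs (Q : bitseq -> bool) r q := fun c => Q (take r.-1 (insw c r.-1 q)).

Lemma take_insw_lt b n r q : q < r -> r <= n.+1 -> size b = n.-1 ->
  take r.-1 (insw b n q) = take r.-1 (insw (take r.-2 b) r.-1 q).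
Proof.
move=> qr rn sb; rewrite !take_mkseq /mkseq.
have -> : minn r.-1 n = r.-1 by lia.
have -> : minn r.-1 r.-1 = r.-1 by lia.
apply/eq_in_map => i; rewrite mem_iota /= => hi.
case: ltnP => h1; first by rewrite nth_take //; lia.
case: eqP => // h2; case: eqP => // h3.
by rewrite nth_take //; lia.
Qed.

Lemma tail_insw_lt b n r q : q < r -> r <= n.+1 -> size b = n.-1 ->
  tailfalse r (insw b n q) = tailfalse r.-1 b.
Proof.
move=> qr rn sb; apply/tailfalseP/tailfalseP; rewrite size_insw sb => H i /andP [ri iw].
  have := H i.+1; rewrite nth_insw; last by lia.
  rewrite ifF; last by lia. rewrite ifF; last by lia. rewrite ifF; last by lia.
  by apply; lia.
rewrite nth_insw //; rewrite ifF; last by lia. rewrite ifF; last by lia.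
rewrite ifF; last by lia.
apply: H; lia.
Qed.

Definition T (Q : bitseq -> bool) r N :=
  count (fun s => Q (take r.-1 (wd s)) && tailfalse r (wd s)) (perms N).

Lemma size_wd s : size (wd s) = (size s).-1.
Proof. exact: size_mkseq. Qed.

Lemma T_rec Q r n : r <= n.+1 ->
  T Q r n.+1 = (if r <= n then T Q r n else 0) + \sum_(q < r) T (Qs Q r q) r.-1 n.
Proof.
move=> rn; rewrite {1}/T (count_dec (fun w => Q (take r.-1 w) && tailfalse r w)).
have inner : forall s, s \in perms n ->
  \sum_(q < n.+1) ((Q (take r.-1 (insw (wd s) n q)) && tailfalse r (insw (wd s) n q)) : nat)
  = \sum_(q < r) ((Qs Q r q (take r.-1.-1 (wd s)) && tailfalse r.-1 (wd s)) : nat)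
    + (if r <= n then ((Q (take r.-1 (wd s)) && tailfalse r (wd s)) : nat) else 0).
  move=> s /size_perms sn; have sb : size (wd s) = n.-1 by rewrite size_wd sn.
  rewrite -(big_mkord xpredT (fun q => ((Q (take r.-1 (insw (wd s) n q)) && tailfalse r (insw (wd s) n q)) : nat))).
  rewrite (big_cat_nat _ (n := r)) //= big_mkord; congr (_ + _).
    apply: eq_bigr => q _; have qr := ltn_ord q.
    by rewrite /Qs -(@take_insw_lt _ n) // (@tail_insw_lt _ n).
  case: (leqP r n) => rn'.
    rewrite big_ltn // take_insw_eq // tail_insw_eq // big1_seq ?addn0 // => q.
    by rewrite mem_index_iota => /andP [h1 h2]; rewrite tail_insw_gt ?andbF //; lia.
  by rewrite big_geq //.
rewrite (eq_big_seq _ inner) big_split /= exchange_big /= addnC; congr (_ + _).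
  case: (r <= n); last by rewrite big1.
  by rewrite /T count_sumb.
by apply: eq_bigr => q _; rewrite /T count_sumb.
Qed.

Lemma T_bin r : forall Q N, r <= N -> T Q r N = 'C(N, r) * T Q r r.
Proof.
elim: r => [|r IHr] Q N.
  move=> _; rewrite bin0 mul1n; elim: N => // N IHN.
  by rewrite T_rec // big_ord0 addn0.
set S := fun n => \sum_(q < r.+1) T (Qs Q r.+1 q) r n.
have SE : forall n, r <= n -> S n = 'C(n, r) * S r.
  move=> n rn; rewrite /S big_distrr /=; apply: eq_bigr => q _.
  by rewrite IHr.
have Tr : T Q r.+1 r.+1 = S r by rewrite T_rec // ltnn.
elim: N => [|N IHN] hN; first by [].
case: (ltngtP N r) => h; first by lia.
  rewrite T_rec // (_ : r < N) // IHN // -/(S N) SE; last by lia.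
  by rewrite Tr binS mulnDl.
by rewrite h binn mul1n.
Qed.

Definition lst N (s : 'S_N) : seq nat := [seq val (s j) | j <- enum 'I_N].

Lemma size_lst N (s : 'S_N) : size (lst s) = N.
Proof. by rewrite size_map size_enum_ord. Qed.

Lemma nth_lst N (s : 'S_N) (j : 'I_N) : nth 0 (lst s) j = s j.
Proof. by rewrite /lst (nth_map j) ?size_enum_ord // nth_ord_enum. Qed.

Lemma is_descentE N (s : 'S_N) i :
  is_descent s i = (0 < i) && nth false (wd (lst s)) i.-1.
Proof.
apply/existsP/idP => [[j /existsP [k /and4P [i0 /eqP ej /eqP ek lt]]]|/andP [i0]].
  rewrite /= in ej ek; rewrite i0 /wd size_lst nth_mkseq; last by have := ltn_ord k; lia.
  have -> : i.-1.+1 = k by lia.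
  by rewrite -ej !nth_lst.
rewrite /wd size_lst; case: (ltnP i.-1 N.-1) => h; last by rewrite nth_default // size_mkseq.
rewrite nth_mkseq // => lt.
have iN : i < N by lia.
have i1N : i.-1 < N by lia.
exists (Ordinal i1N); apply/existsP; exists (Ordinal iN).
rewrite i0 /= !eqxx /=.
move: lt; rewrite (_ : i.-1.+1 = i); last by lia.
by rewrite (nth_lst s (Ordinal iN)) (nth_lst s (Ordinal i1N)).
Qed.

Definition hds (I : seq nat) N (w : bitseq) :=
  all (fun i => (0 < i) && nth false w i.-1) I &&
  all (fun j => ((0 < j) && nth false w j.-1) ==> (j \in I)) (iota 0 N).

Lemma has_descent_setE I N (s : 'S_N) : has_descent_set I s = hds I N (wd (lst s)).
Proof.
rewrite /has_descent_set /hds; congr (_ && _).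
  by apply: eq_all => i; rewrite is_descentE.
apply/forallP/allP => [H x|H j].
  rewrite mem_iota /= => xN; have := H (Ordinal xN); by rewrite is_descentE.
by rewrite is_descentE; apply: H; rewrite mem_iota /=.
Qed.

Lemma lst_inj N : injective (@lst N).
Proof.
move=> s t e; apply/permP => j; apply: val_inj => /=.
by rewrite -!nth_lst e.
Qed.

Lemma lst_perms N (s : 'S_N) : lst s \in perms N.
Proof.
rewrite mem_permutations /lst -val_enum_ord.
rewrite (_ : [seq \val (s j) | j <- enum 'I_N] = map val (map s (enum 'I_N))); last first.
  by rewrite -[RHS]map_comp.
apply: perm_map; apply: uniq_perm.
- by rewrite map_inj_uniq ?enum_uniq //; exact: perm_inj.
- exact: enum_uniq.
move=> x; rewrite mem_enum; apply/mapP; exists ((s^-1)%g x); first by rewrite mem_enum.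
by rewrite permKV.
Qed.

Lemma card_set_count N (P : pred 'S_N) : #|[set s : 'S_N | P s]| = count P (enum 'S_N).
Proof. by rewrite cardsE cardE /enum_mem size_filter filter_predT. Qed.

Lemma dcountE I N : dcount I N = count (fun s => hds I N (wd s)) (perms N).
Proof.
rewrite /dcount (card_set_count (@has_descent_set I N)).
rewrite (eq_count (a2 := fun s => hds I N (wd (lst s)))); last by move=> s; rewrite /= has_descent_setE.
rewrite -(count_map (@lst N) (fun s => hds I N (wd s))).
apply/seq.permP; apply: uniq_perm.
- by rewrite map_inj_uniq ?enum_uniq //; exact: lst_inj.
- exact: permutations_uniq.
have U : uniq (map (@lst N) (enum 'S_N)) by rewrite map_inj_uniq ?enum_uniq //; exact: lst_inj.
have S1 : {subset map (@lst N) (enum 'S_N) <= perms N}.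
  by move=> x /mapP [s _ ->]; exact: lst_perms.
have S2 : size (perms N) <= size (map (@lst N) (enum 'S_N)).
  by rewrite size_map -cardT card_Sn size_permutations ?iota_uniq // size_iota.
by have [_ E] := uniq_min_size U S1 S2.
Qed.

Definition chi (K : seq nat) n : bitseq := mkseq (fun i => i.+1 \in K) n.

Lemma hds_chi K N w : size w = N.-1 -> all (fun i => 0 < i < N) K ->
  hds K N w = (w == chi K N.-1).
Proof.
move=> sw /allP Kr; apply/idP/eqP => [/andP [/allP H1 /allP H2]|->].
  apply: (@eq_from_nth _ false) => [|i]; first by rewrite size_mkseq.
  rewrite sw => iN; rewrite nth_mkseq //.
  apply/idP/idP => [wi|iK].
    have h : i.+1 \in iota 0 N by rewrite mem_iota; lia.
    by have := H2 _ h; rewrite /= wi.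
  by have /andP [_] := H1 _ iK.
apply/andP; split; apply/allP => i.
  move=> iK; have /andP [i0 iN] := Kr i iK; rewrite i0 nth_mkseq; last by lia.
  by have -> : i.-1.+1 = i by lia.
rewrite mem_iota /= => iN; apply/implyP => /andP [i0].
case: (ltnP i.-1 N.-1) => h; last by rewrite nth_default // size_mkseq.
by rewrite nth_mkseq //; have -> : i.-1.+1 = i by lia.
Qed.

Section WL.
Variables (I : seq nat) (m : nat).
Hypothesis m0 : 0 < m.
Hypothesis mI : m \in I.
Hypothesis Im : all (fun i => i <= m) I.
Definition I' := [seq i <- I | i < m].
Definition QI (b : bitseq) := b == chi I m.-1.

Lemma chiI'_nth n : m <= n -> nth false (chi I' n) m.-1 = false.
Proof.
move=> mn; rewrite nth_mkseq; last by lia.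
rewrite mem_filter; have -> : m.-1.+1 = m by lia.
by rewrite ltnn.
Qed.

Lemma chiI_nth n : m <= n -> nth false (chi I n) m.-1 = true.
Proof. move=> mn; rewrite nth_mkseq; last by lia. by have -> : m.-1.+1 = m by lia. Qed.

Lemma WL w : m <= size w ->
  ((QI (take m.-1 w) && tailfalse m w) : nat) =
  (w == chi I (size w)) + (w == chi I' (size w)).
Proof.
move=> mw; have Imi := allP Im.
have takeE : forall K, (forall i, i < m -> (i \in K) = (i \in I)) ->
    take m.-1 (chi K (size w)) = chi I m.-1.
  move=> K HK; rewrite /chi take_mkseq; have -> : minn m.-1 (size w) = m.-1 by lia.
  apply/eq_in_map => i; rewrite mem_iota /= => hi; apply: HK; lia.
have tailE : forall K, all (fun i => i <= m) K -> tailfalse m (chi K (size w)).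
  move=> K /allP HK; apply/tailfalseP => i /andP [mi iw].
  rewrite size_mkseq in iw; rewrite nth_mkseq //.
  by apply/negbTE/negP => /HK; lia.
have I'sub : all (fun i => i <= m) I'.
  by apply/allP => i; rewrite mem_filter => /andP [h _]; lia.
have I'mem : forall i, i < m -> (i \in I') = (i \in I).
  by move=> i hi; rewrite mem_filter hi.
case: (eqVneq w (chi I (size w))) => [e|ne1].
  have -> : (w == chi I' (size w)) = false.
    by apply/negbTE/negP => /eqP e'; have := chiI'_nth mw; rewrite -e' e chiI_nth.
  by rewrite {1 2}e takeE // tailE // /QI eqxx.
case: (eqVneq w (chi I' (size w))) => [e|ne2].
  by rewrite {1 2}e takeE // tailE // /QI eqxx.
rewrite /=; case: (boolP (QI (take m.-1 w))) => //= /eqP hq.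
suff -> : tailfalse m w = false by [].
apply/negP => /tailfalseP ht.
have wE : forall i, i < size w -> i != m.-1 -> nth false w i = (i.+1 \in I).
  move=> i iw ne; case: (ltnP i m.-1) => h.
    by rewrite -(nth_take _ h) hq nth_mkseq.
  rewrite ht; last by lia.
  by apply/esym/negbTE/negP => /Imi; lia.
case: (boolP (nth false w m.-1)) => hm.
  move/negP: ne1; apply; apply/eqP/(@eq_from_nth _ false); first by rewrite size_mkseq.
  move=> i iw; rewrite nth_mkseq //; case: (eqVneq i m.-1) => [->|ne]; last exact: wE.
  by rewrite hm; have -> : m.-1.+1 = m by lia.
move/negP: ne2; apply; apply/eqP/(@eq_from_nth _ false); first by rewrite size_mkseq.
move=> i iw; rewrite nth_mkseq //; case: (eqVneq i m.-1) => [->|ne].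
  rewrite (negbTE hm) mem_filter; have -> : m.-1.+1 = m by lia.
  by rewrite ltnn.
rewrite wE // mem_filter; case: (ltnP i.+1 m) => //= h.
by apply/negbTE/negP => /Imi; lia.
Qed.
End WL.

Lemma maxI_mem (I : seq nat) : I != [::] -> \max_(i <- I) i \in I.
Proof.
elim: I => // x I IH _; rewrite big_cons inE.
case: (eqVneq I [::]) => [->|ne]; first by rewrite big_nil maxn0 eqxx.
move: (IH ne); rewrite /maxn; case: ltnP => _ H; [by rewrite H orbT | by rewrite eqxx].
Qed.

Lemma le_maxI (I : seq nat) : all (fun i => i <= \max_(j <- I) j) I.
Proof.
elim: I => //= x I IH; rewrite big_cons leq_maxl /=.
by apply: sub_all IH => i /= h; apply: (leq_trans h); rewrite leq_maxr.
Qed.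

Lemma maxI_lt (I : seq nat) k : 0 < k -> all (fun i => i < k) I -> \max_(i <- I) i < k.
Proof.
move=> k0; elim: I => [|x I IH]; first by rewrite big_nil.
by rewrite big_cons /= => /andP [h1 h2]; rewrite gtn_max h1 IH.
Qed.

Lemma dcount_chi (I : seq nat) N : all (fun i => 0 < i < N) I ->
  dcount I N = count (fun s => wd s == chi I N.-1) (perms N).
Proof.
move=> H; rewrite dcountE; apply: eq_in_count => s /size_perms sN.
by rewrite hds_chi // size_wd sN.
Qed.

Lemma dcount_nil N : dcount [::] N = 1.
Proof.
have H : T (fun _ => true) 0 N = 1 by rewrite T_bin // bin0 mul1n.
rewrite -H dcount_chi // /T; apply: eq_in_count => s /size_perms sN.
have sw : size (wd s) = N.-1 by rewrite size_wd sN.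
apply/eqP/tailfalseP => [-> i /andP [_]|H1].
  by rewrite size_mkseq => iN; rewrite nth_mkseq.
apply: (@eq_from_nth _ false); first by rewrite /chi size_mkseq sw.
by move=> i iN; rewrite H1 ?iN // nth_mkseq // -sw.
Qed.

Lemma chi_I'_small I m : chi (I' I m) m.-1 = chi I m.-1.
Proof.
apply/eq_in_map => i; rewrite mem_iota /= => hi.
by rewrite mem_filter (_ : i.+1 < m) //; lia.
Qed.

Section Main.
Variable I : seq nat.
Hypothesis Ipos : all (fun i => 0 < i) I.
Hypothesis Ine : I != [::].
Let m := \max_(i <- I) i.
Let mI : m \in I := maxI_mem Ine.
Let Im : all (fun i => i <= m) I := le_maxI I.
Let m0 : 0 < m.
Proof. by have := allP Ipos _ mI. Qed.

Lemma I'_range N : m <= N -> all (fun i => 0 < i < N) (I' I m).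
Proof.
move=> mN; apply/allP => i; rewrite mem_filter => /andP [h iI].
by rewrite (allP Ipos _ iI); lia.
Qed.

Lemma I_range N : m < N -> all (fun i => 0 < i < N) I.
Proof.
move=> mN; apply/allP => i iI.
by rewrite (allP Ipos _ iI) /=; have := allP Im _ iI; lia.
Qed.

Lemma T_QI_m : T (QI I m) m m = dcount (I' I m) m.
Proof.
rewrite (dcount_chi (I'_range (leqnn m))) /T; apply: eq_in_count => s /size_perms sN.
have sw : size (wd s) = m.-1 by rewrite size_wd sN.
rewrite take_oversize ?sw // chi_I'_small.
have -> : tailfalse m (wd s) by apply/tailfalseP; lia.
by rewrite andbT.
Qed.

Lemma rec_R N : m < N -> dcount I N + dcount (I' I m) N = 'C(N, m) * dcount (I' I m) m.
Proof.
move=> mN; rewrite -T_QI_m -T_bin; last by lia.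
rewrite (dcount_chi (I_range mN)) (dcount_chi (I'_range (ltnW mN))) /T !count_sumb -big_split.
apply: eq_big_seq => s /size_perms sN.
have sw : size (wd s) = N.-1 by rewrite size_wd sN.
by rewrite (WL m0 mI Im) ?sw //; lia.
Qed.

Lemma rec_A n : m <= n -> 'C(n, m) * dcount (I' I m) m <= dcount I n.+1.
Proof.
move=> mn; rewrite -T_QI_m -T_bin // (dcount_chi (I_range (N := n.+1) _)); last by lia.
rewrite (count_dec (fun w => w == chi I n.+1.-1)) /T count_sumb.
rewrite [X in X <= _]big_seq [X in _ <= X]big_seq; apply: leq_sum => s /size_perms sN.
have mn1 : m < n.+1 by lia.
rewrite (bigD1 (Ordinal mn1)) //= -[X in X <= _]addn0 leq_add // {2}/nat_of_bool.
have sb : size (wd s) = n.-1 by rewrite size_wd sN.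
have := WL m0 mI Im (w := insw (wd s) n m); rewrite size_insw => /(_ mn).
rewrite take_insw_eq // tail_insw_eq // => ->.
suff -> : (insw (wd s) n m == chi (I' I m) n) = false by rewrite addn0.
apply/negbTE/negP => /eqP e.
have := chiI'_nth (I:=I) m0 mI Im mn; rewrite -e nth_insw; last by lia.
by rewrite ifF; [rewrite ifT //; apply/eqP; lia | lia].
Qed.
End Main.
Local Open Scope ring_scope.

Definition Bp (m : nat) : {poly rat} :=
  (\prod_(i < m) ('X - (i%:R)%:P)) * ((m`!%:R)^-1)%:P.

Lemma prod_nat (k m : nat) : \prod_(i < m) (k%:R - i%:R : rat) = (k ^_ m)%:R.
Proof.
elim: m => [|m IH]; first by rewrite big_ord0 ffactn0.
rewrite big_ord_recr /= IH ffactnSr natrM.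
case: (leqP m k) => h; first by rewrite (natrB _ h).
by rewrite ffact_small // !mul0r.
Qed.

Lemma prod_m1 (m : nat) : \prod_(i < m) (-1 - i%:R : rat) = (-1) ^+ m * (m`!)%:R.
Proof.
elim: m => [|m IH]; first by rewrite big_ord0 expr0 fact0 mul1r.
rewrite big_ord_recr /= IH factS natrM exprS -natr1.
ring.
Qed.

Lemma Bp_nat (m k : nat) : (Bp m).[k%:R] = ('C(k, m))%:R.
Proof.
rewrite /Bp hornerM hornerC horner_prod.
under eq_bigr do rewrite hornerXsubC.
rewrite prod_nat -bin_ffact natrM -mulrA divff ?mulr1 //.
by rewrite pnatr_eq0 -lt0n fact_gt0.
Qed.

Lemma Bp_m1 (m : nat) : (Bp m).[-1] = (-1) ^+ m.
Proof.
rewrite /Bp hornerM hornerC horner_prod.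
under eq_bigr do rewrite hornerXsubC.
rewrite prod_m1 -mulrA divff ?mulr1 //.
by rewrite pnatr_eq0 -lt0n fact_gt0.
Qed.

Lemma poly_eq_nat (p q : {poly rat}) (M : nat) :
  (forall k : nat, (M < k)%N -> p.[k%:R] = q.[k%:R]) -> p = q.
Proof.
move=> H; apply/eqP; rewrite -subr_eq0; apply/negPn/negP => nz.
set rs := [seq ((M.+1 + i)%N)%:R : rat | i <- iota 0 (size (p - q))].
have H1 : all (root (p - q)) rs.
  apply/allP => x /mapP [i _ ->]; rewrite rootE !hornerE H ?subrr //; lia.
have H2 : uniq rs.
  rewrite map_inj_uniq ?iota_uniq // => i j /eqP; rewrite eqr_nat => /eqP; lia.
by have := max_poly_roots nz H1 H2; rewrite size_map size_iota ltnn.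
Qed.

Lemma size_I' (I : seq nat) m : m \in I -> (size (I' I m) < size I)%N.
Proof.
move=> mI; rewrite size_filter -[X in (_ < X)%N](count_predC (fun i => (i < m)%N) I).
rewrite -[X in (X < _)%N]addn0 ltn_add2l -has_count.
by apply/hasP; exists m => //=; rewrite ltnn.
Qed.

Lemma signK (a b : nat) (x : rat) : (-1) ^+ a * ((-1) ^+ b * x) = (-1) ^+ (a + b) * x.
Proof. by rewrite mulrA exprD. Qed.

Lemma nil_case : exists v : rat,
    [/\ (forall (p : {poly rat}) (M : nat), (\max_(i <- [::]) i <= M)%N ->
           (forall k, (M < k)%N -> p.[k%:R] = (dcount [::] k)%:R) -> p.[-1] = v),
        0 <= (-1) ^+ (\max_(i <- [::]) i) * v &
        (forall n, (\max_(i <- [::]) i + 2 <= n)%N ->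
           (-1) ^+ (\max_(i <- [::]) i) * v <= (dcount [::] n)%:R)].
Proof.
exists 1; split; rewrite ?big_nil ?expr0 ?mul1r ?dcount_nil //.
move=> p M _ H; have -> : p = 1.
  by apply: (poly_eq_nat (M := M)) => j hj; rewrite H // dcount_nil hornerC.
by rewrite hornerC.
by move=> n _; rewrite dcount_nil.
Qed.

Lemma keyE (m m' : nat) (c v : rat) :
  (-1) ^+ m * ((-1) ^+ m * c - v) = c - (-1) ^+ (m + m') * ((-1) ^+ m' * v).
Proof.
have sq : forall a, (-1) ^+ (a + a) = 1 :> rat.
  by move=> a; rewrite -signr_odd addnn odd_double expr0.
rewrite mulrBr [in LHS]mulrA -[in LHS]exprD sq mul1r mulrA -exprD; congr (_ - _).
by rewrite -addnA exprD sq mulr1.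
Qed.

Lemma main_ind k (I : seq nat) : (size I <= k)%N -> all (fun i => 0 < i)%N I ->
  exists v : rat,
    [/\ (forall (p : {poly rat}) (M : nat), (\max_(i <- I) i <= M)%N ->
           (forall k, (M < k)%N -> p.[k%:R] = (dcount I k)%:R) -> p.[-1] = v),
        0 <= (-1) ^+ (\max_(i <- I) i) * v &
        (forall n, (\max_(i <- I) i + 2 <= n)%N ->
           (-1) ^+ (\max_(i <- I) i) * v <= (dcount I n)%:R)].
Proof.
elim: k I => [|k IHk] I sI Ipos.
  by case: I sI Ipos => // _ _; exact: nil_case.
case: (eqVneq I [::]) => [eI|Ine].
  by move: Ipos; rewrite eI => _; exact: nil_case.
set m := \max_(i <- I) i.
have mI : m \in I := maxI_mem Ine.
have Im : all (fun i => i <= m)%N I := le_maxI I.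
have m0 : (0 < m)%N by have := allP Ipos _ mI.
set J := I' I m.
have sJ : (size J <= k)%N by have := size_I' mI; rewrite -/J; lia.
have Jpos : all (fun i => 0 < i)%N J.
  by apply/allP => i; rewrite mem_filter => /andP [_ iI]; exact: (allP Ipos _ iI).
have Jlt : all (fun i => i < m)%N J by apply/allP => i; rewrite mem_filter => /andP [].
set m' := \max_(i <- J) i.
have m'm : (m' < m)%N by apply: maxI_lt.
have [v' [Hv' e'0 e'le]] := IHk J sJ Jpos.
set c := dcount J m.
have key : 0 <= (-1) ^+ m * ((-1) ^+ m * c%:R - v') /\
   forall n, (m + 2 <= n)%N -> (-1) ^+ m * ((-1) ^+ m * c%:R - v') <= (dcount I n)%:R.
set e' := (-1) ^+ m' * v'.
rewrite -/m' -/e' in e'0 e'le.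
rewrite (keyE m m') -/e'.
have hA : forall n, (m <= n)%N -> ('C(n, m) * c <= dcount I n.+1)%N.
  by move=> n mn; have := rec_A Ipos Ine mn.
have hR : forall N, (m < N)%N -> (dcount I N + dcount J N = 'C(N, m) * c)%N.
  by move=> N mN; have := rec_R Ipos Ine mN.
have c0 : 0 <= c%:R :> rat by rewrite ler0n.
case: (boolP (odd (m + m'))) => hodd.
  rewrite -signr_odd hodd expr1 mulN1r opprK.
  split; first exact: addr_ge0.
  move=> n mn.
  have h1 := e'le m.+1 ltac:(lia).
  have h2 := hR m.+1 (ltnSn m).
  have h3 := hA m (leqnn m); rewrite binn mul1n in h3.
  rewrite binSn in h2.
  have h4 := hA n.-1 ltac:(lia); rewrite (_ : n.-1.+1 = n) in h4; last by lia.
  have h5 : (m.+1 <= 'C(n.-1, m))%N.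
    by rewrite -[X in (X <= _)%N]binSn; apply: leq_bin2l; lia.
  apply: (le_trans (lerD (lexx _) h1)); rewrite -natrD ler_nat.
  apply: leq_trans h4; apply: leq_trans (leq_mul h5 (leqnn c)).
  by rewrite -h2 leq_add2r.
have hnm : m != m'.+1.
  by apply/eqP => e; move: hodd; rewrite e addSn addnn /= odd_double.
rewrite -signr_odd (negbTE hodd) expr0 mul1r.
split.
  by rewrite subr_ge0; have := e'le m ltac:(lia).
move=> n mn.
have h4 := hA n.-1 ltac:(lia); rewrite (_ : n.-1.+1 = n) in h4; last by lia.
have h5 : (0 < 'C(n.-1, m))%N by rewrite bin_gt0; lia.
apply: (le_trans (y := c%:R)); first by rewrite lerBlDr lerDl.
rewrite ler_nat; apply: leq_trans h4.
by rewrite leq_pmull.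
exists ((-1) ^+ m * c%:R - v'); split; [|exact: key.1|exact: key.2].
- move=> p M mM Hp.
  set p' := c%:R *: Bp m - p.
  have := Hv' p' M ltac:(lia).
  have Hp' : forall j, (M < j)%N -> p'.[j%:R] = (dcount J j)%:R.
    move=> j hj; rewrite /p' hornerD hornerN hornerZ Bp_nat Hp //.
    have := rec_R Ipos Ine (N := j) ltac:(lia); rewrite -/m -/J -/c => R.
    apply/eqP; rewrite subr_eq -natrM -natrD mulnC -R addnC eqxx //.
  move=> /(_ Hp'); rewrite /p' hornerD hornerN hornerZ Bp_m1 => <-.
  by rewrite mulrC opprB addrC subrK.
Qed.

Unset Implicit Arguments.
Set Strict Implicit.

Theorem proposition3p9 (I : seq nat) (p : {poly rat}) :
  all (fun i => (0 < i)%N) I ->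
  (forall k : nat, (\max_(i <- I) i < k)%N -> p.[k%:R] = (dcount I k)%:R) ->
  forall n : nat, (\max_(i <- I) i + 2 <= n)%N ->
    `|p.[-1]| <= (dcount I n)%:R.
Proof.
move=> Ipos Hp n hn.
have [v [H1 H2 H3]] := main_ind (leqnn (size I)) Ipos.
rewrite (H1 p _ (leqnn _) Hp).
have -> : `|v| = (-1) ^+ (\max_(i <- I) i) * v.
  by rewrite -(ger0_norm H2) normrM normrX normrN1 expr1n mul1r.
exact: H3.
Qed.
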